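(* The Minimax SCC $M$ coincides with the Borda SCC $Bor$ (as functions on $\mathcal P$) if and only if $n=2$.
   Context: Let $n,h\ge2$, $N=\{1,\dots,n\}$, $H=\{1,\dots,h\}$; $\mathcal P$ is the set of $h$-tuples $p$ of linear orders on $N$; $x>_{p_i}y$ means $x\neq y$ and $p_i$ ranks $x$ above $y$; $\mathrm{rank}_{p_i}(x)=|\{y: y>_{p_i}x\}|+1$. $M(p)=\mathrm{argmin}_{x\in N}\max_{y\neq x}|\{i: y>_{p_i}x\}|$ and $Bor(p)=\mathrm{argmax}_{x\in N}\sum_{i=1}^h(n-\mathrm{rank}_{p_i}(x))$. *)

(* Defs.v *)
From mathcomp Require Import all_boot all_order all_fingroup.
Set Implicit Arguments. Unset Strict Implicit. Unset Printing Implicit Defensive.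

(* Alternatives N = {1..n} are encoded as 'I_n, voters H = {1..h} as 'I_h.
   A linear order on 'I_n is encoded by its position permutation
   sigma : {perm 'I_n}: sigma x is the (0-based) position of x, position 0
   being the top.  Every linear order on a finite set corresponds to exactly
   one such bijection. *)
Definition lorder (n : nat) := {perm 'I_n}.

Definition above n (s : lorder n) (x y : 'I_n) : bool := s x < s y.

Definition rank n (s : lorder n) (x : 'I_n) : nat :=
  #|[set y | above s y x]| + 1.

Definition profile (n h : nat) := {ffun 'I_h -> lorder n}.

Definition nprefer n h (p : profile n h) (y x : 'I_n) : nat :=
  #|[set i : 'I_h | above (p i) y x]|.

Definition minimax_score n h (p : profile n h) (x : 'I_n) : nat :=
  \max_(y | y != x) nprefer p y x.

Definition Minimax n h (p : profile n h) : {set 'I_n} :=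
  [set x | [forall z, minimax_score p x <= minimax_score p z]].

Definition borda_score n h (p : profile n h) (x : 'I_n) : nat :=
  \sum_(i < h) (n - rank (p i) x).

Definition Borda n h (p : profile n h) : {set 'I_n} :=
  [set x | [forall z, borda_score p z <= borda_score p x]].

(* Main.v *)
Require Import Defs.
From mathcomp Require Import all_boot all_order all_fingroup.
From mathcomp Require Import zify.

Lemma sum_split N k A B : k <= N ->
  \sum_(i < N) (if i < k then A else B) = k * A + (N - k) * B.
Proof.
move=> hk.
rewrite -(big_mkord xpredT (fun i => if i < k then A else B)).
rewrite (@big_cat_nat _ _ _ k 0 N) //=.
rewrite (@eq_big_nat _ _ _ 0 k _ (fun=> A)); last by move=> i /andP[_ ->].
rewrite (@eq_big_nat _ _ _ k N _ (fun=> B)); last first.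
  by move=> i /andP[hi _]; rewrite ltnNge hi.
by rewrite !sum_nat_const_nat subn0.
Qed.

Lemma card_sum N (P : pred 'I_N) :
  #|[set i | P i]| = \sum_(i < N) (if P i then 1 else 0).
Proof.
rewrite -sum1_card big_mkcond; apply: eq_bigr => i _; by rewrite inE.
Qed.

Lemma card_lt N k : k <= N -> #|[set i : 'I_N | i < k]| = k.
Proof.
move=> hk; rewrite card_sum sum_split //; lia.
Qed.

Lemma card_ge N k : k <= N -> #|[set i : 'I_N | ~~ (i < k)]| = N - k.
Proof.
move=> hk; rewrite card_sum.
rewrite (eq_bigr (fun i : 'I_N => if i < k then 0 else 1)); last first.
  by move=> i _; case: (i < k).
rewrite sum_split //; lia.
Qed.

Lemma rank_pos n (s : lorder n) x : rank s x = (s x).+1.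
Proof.
rewrite /rank addn1; congr S.
rewrite -(card_imset _ (@perm_inj _ s)).
have -> : [set s y | y in [set y | above s y x]] = [set j : 'I_n | j < s x].
  apply/setP => j; rewrite inE; apply/imsetP/idP.
    by case=> y; rewrite inE /above => h ->.
  by move=> hj; exists (s^-1 j)%g; rewrite ?inE /above permKV.
by apply: card_lt; apply: ltnW.
Qed.

Lemma borda_eq n h (p : profile n h) x :
  borda_score p x = \sum_(i < h) (n - (p i x).+1).
Proof. by apply: eq_bigr => i _; rewrite rank_pos. Qed.

Lemma two_key h (p : profile 2 h) (x y : 'I_2) : y != x ->
  minimax_score p x + borda_score p x = h.
Proof.
move=> hyx.
have -> : minimax_score p x = nprefer p y x.
  rewrite /minimax_score (big_pred1 y); first by [].
  move=> j /=; move: hyx; case: x => [[|[|?]] ?] //; case: y => [[|[|?]] ?] //;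
    case: j => [[|[|?]] ?] //.
rewrite borda_eq /nprefer card_sum -big_split /=.
rewrite -[h in _ = h]card_ord -sum1_card.
apply: eq_bigr => i _.
set s := p i.
have hs : s x != s y by apply: contra hyx => /eqP/perm_inj ->.
rewrite /above.
move: hs; case: (s x) => [[|[|?]] ?] //; case: (s y) => [[|[|?]] ?] //.
Qed.

Lemma two_eq h (p : profile 2 h) : Minimax p = Borda p.
Proof.
have oth : forall x : 'I_2, exists y, y != x.
  move=> x; exists (if x == ord0 then ord_max else ord0).
  by case: x => [[|[|?]] ?].
apply/setP => x; rewrite !inE; apply: eq_forallb => z.
have [y hy] := oth x; have [w hw] := oth z.
have := @two_key h p x y hy; have := @two_key h p z w hw.
move=> h1 h2; apply/idP/idP; lia.
Qed.

Section Counter.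
Variables (n' h : nat).
Hypothesis hh : 2 <= h.
Local Notation N := n'.+3.
Let a : 'I_N := ord0.
Let b : 'I_N := inord 1.
Let c : 'I_N := inord 2.
Let va : nat_of_ord a = 0. Proof. by []. Qed.
Let vb : nat_of_ord b = 1. Proof. by rewrite /b inordK. Qed.
Let vc : nat_of_ord c = 2. Proof. by rewrite /c inordK. Qed.
Let cyc : {perm 'I_N} := (tperm a c * tperm a b)%g.
Let ab : a != b. Proof. by apply/eqP => /(congr1 (@nat_of_ord _)); rewrite va vb. Qed.
Let ac : a != c. Proof. by apply/eqP => /(congr1 (@nat_of_ord _)); rewrite va vc. Qed.
Let bc : b != c. Proof. by apply/eqP => /(congr1 (@nat_of_ord _)); rewrite vb vc. Qed.
Let cyca : cyc a = c.
Proof. by rewrite permM tpermL tpermD // eq_sym. Qed.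
Let cycb : cyc b = a.
Proof. rewrite permM (@tpermD _ a c b) ?tpermR //; by rewrite eq_sym. Qed.
Let m := h %/ 2.
Let P : profile N h := [ffun i : 'I_h => if i < m then cyc else 1%g].
Let Pi i x : P i x = if i < m then cyc x else x.
Proof. by rewrite /P ffunE; case: (i < m); rewrite ?perm1. Qed.

Let bordaP x : borda_score P x =
  m * (N - (cyc x).+1) + (h - m) * (N - x.+1).
Proof.
rewrite borda_eq -sum_split; last by rewrite /m; lia.
by apply: eq_bigr => i _; rewrite Pi; case: (i < m).
Qed.

Let score_a : minimax_score P a <= m.
Proof.
apply/bigmax_leqP => y _.
rewrite /nprefer -[m in _ <= m](@card_lt h m); last by rewrite /m; lia.
apply: subset_leq_card; apply/subsetP => i; rewrite !inE /above !Pi.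
by case: (i < m).
Qed.


Let score_z z : z != a -> h - m <= minimax_score P z.
Proof.
move=> hz.
have az : a != z by rewrite eq_sym.
apply: leq_trans (@leq_bigmax_cond _ (fun y => y != z) _ a az).
rewrite /nprefer -card_ge; last by rewrite /m; lia.
apply: subset_leq_card; apply/subsetP => i; rewrite !inE /above !Pi.
move/negbTE => ->; rewrite va lt0n.
by apply: contra hz => /eqP hz0; apply/eqP/val_inj.
Qed.

Lemma counter_ex : exists p : profile N h, Minimax p != Borda p.
Proof.
exists P.
have hm1 : m <= h - m by rewrite /m; lia.
have [h3|h3] := eqVneq h 3.
  have m1 : m = 1 by rewrite /m h3.
  apply/eqP => E.
  have : b \in Minimax P.
    rewrite E inE; apply/forallP => z.
    rewrite !bordaP cycb va vb.
    have [->|hz] := eqVneq z a.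
      rewrite cyca vc va; lia.
    have : nat_of_ord z != 0.
      by apply: contra hz => /eqP hz0; apply/eqP/val_inj.
    lia.
  rewrite inE => /forallP /(_ a).
  have ba : b != a by rewrite eq_sym.
  have := score_a; have := score_z b ba.
  lia.
have hk : h - m < 2 * m by rewrite /m; lia.
apply/eqP => E.
have : a \in Minimax P.
  rewrite inE; apply/forallP => z.
  have [->|hz] := eqVneq z a; first by [].
  exact: leq_trans score_a (leq_trans hm1 (score_z z hz)).
rewrite E inE => /forallP /(_ b).
rewrite !bordaP cyca cycb va vb vc.
nia.
Qed.
End Counter.

Theorem corollary1 (n h : nat) (hn : 2 <= n) (hh : 2 <= h) :
  (forall p : profile n h, Minimax p = Borda p) <-> n = 2.
Proof.
split; last by move=> E; subst n; exact: two_eq.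
case: n hn => [|[|[|n']]] // _ H.
have [p hp] := @counter_ex n' h hh.
by rewrite H eqxx in hp.
Qed.
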